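(* Let $I\ge 2$, let $\mathcal F_I$ be a saturated fraction of the $I\times I$ design $[I]\times[I]$, and let $E_{I+1}\subseteq[I+1]\times[I+1]$ with $\mathcal F_I\cap E_{I+1}=\emptyset$. Set $\mathcal F_{I+1}=\mathcal F_I\cup E_{I+1}$, viewed as a fraction of $[I+1]\times[I+1]$. Then $\mathcal F_{I+1}$ is saturated if and only if $E_{I+1}$ consists of exactly two points, both lying in $\{(i,j)\in[I+1]\times[I+1]: i=I+1 \text{ or } j=I+1\}$, and the margins of $\mathcal F_{I+1}$ satisfy $m_{A,I+1}\ge 1$ and $m_{B,I+1}\ge 1$.
   Context: For a fraction $\mathcal F\subseteq[I]\times[J]$, its margins are $m_{A,i}=\#\{(d_1,d_2)\in\mathcal F: d_1=i\}$ and $m_{B,j}=\#\{(d_1,d_2)\in\mathcal F: d_2=j\}$. For $(i,j)\in[I]\times[J]$ let $r_{(i,j)}\in\mathbb R^{I+J-1}$ be the row vector $(1,a_1,\dots,a_{I-1},b_1,\dots,b_{J-1})$ with $a_s=1$ iff $s=i$ and $b_t=1$ iff $t=j$ (all other entries $0$); $X_{\mathcal F}$ is the matrix with rows $r_{(i,j)}$, $(i,j)\in\mathcal F$. $\mathcal F$ is saturated if $\#\mathcal F=I+J-1$ and $X_{\mathcal F}$ is non-singular. *)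

(* Defs.v *)
From HB Require Import structures.
From mathcomp Require Import all_boot all_order all_algebra.
Set Implicit Arguments. Unset Strict Implicit. Unset Printing Implicit Defensive.
Import GRing.Theory Num.Theory.

(* Levels of the factors are 0-based: level k : 'I_I stands for level k+1 of [I].
   So the last level I of [I] is ord_max. *)

Local Open Scope ring_scope.

(* The row vector r_(i,j) in Q^(I+J-1), columns indexed 0..I+J-2:
   column 0          : the constant 1
   column s, 1<=s<=I-1: a_s = 1 iff s = i (1-based), i.e. s = i0.+1
   column I-1+t, 1<=t<=J-1: b_t = 1 iff t = j (1-based), i.e. column = I + j0 *)
Definition rowvec (I J : nat) (p : 'I_I * 'I_J) : 'rV[rat]_(I + J - 1) :=
  \row_(c < I + J - 1)
    (if (c == 0%N :> nat) then 1
     else if (c < I)%N then ((c == (p.1).+1 :> nat)%:R)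
     else ((c == (I + p.2)%N :> nat)%:R)).

Definition XF (I J : nat) (F : {set 'I_I * 'I_J}) : 'M[rat]_(#|F|, I + J - 1) :=
  \matrix_(k < #|F|) rowvec (enum_val k).

Definition saturated (I J : nat) (F : {set 'I_I * 'I_J}) : Prop :=
  exists e : #|F| = (I + J - 1)%N, castmx (e, erefl) (XF F) \in unitmx.

Definition marginA (I J : nat) (F : {set 'I_I * 'I_J}) (i : 'I_I) : nat :=
  #|[set p in F | p.1 == i]|.
Definition marginB (I J : nat) (F : {set 'I_I * 'I_J}) (j : 'I_J) : nat :=
  #|[set p in F | p.2 == j]|.

Definition embed (I J : nat) (F : {set 'I_I * 'I_J}) : {set 'I_I.+1 * 'I_J.+1} :=
  [set (widen_ord (leqnSn I) p.1, widen_ord (leqnSn J) p.2) | p in F].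

(* Main.v *)
Require Import Defs.
From HB Require Import structures.
From mathcomp Require Import all_boot all_order all_algebra zify ring lra.
Set Implicit Arguments. Unset Strict Implicit. Unset Printing Implicit Defensive.
Import GRing.Theory Num.Theory.
Local Open Scope ring_scope.
Section H.
Variables I J : nat.
Local Notation D := (I.+1 + J.+1 - 1)%N.

Definition xat (x : 'cV[rat]_D) (k : nat) : rat := \sum_(c < D) ((c:nat) == k)%:R * x c 0.

Lemma xat_lt x (c : 'I_D) : xat x c = x c 0.
Proof.
rewrite /xat (bigD1 c) //= eqxx mul1r big1 ?addr0 // => c' /negbTE.
by rewrite -val_eqE /= => ->; rewrite mul0r.
Qed.

Lemma xat_ge x k : (D <= k)%N -> xat x k = 0.
Proof.
move=> hk; rewrite /xat big1 // => c _.
have : (c:nat) != k by apply/eqP => e; move: (ltn_ord c); rewrite e; lia.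
by move/negbTE => ->; rewrite mul0r.
Qed.

Definition valx (x : 'cV[rat]_D) (p : 'I_I.+1 * 'I_J.+1) :=
  \sum_c rowvec p 0 c * x c 0.

Lemma rowvec_split (p : 'I_I.+1 * 'I_J.+1) c : rowvec p 0 c =
  ((c:nat)==0%N)%:R + ((p.1 < I)%N)%:R * ((c:nat) == p.1.+1)%:R + ((c:nat) == I.+1 + p.2)%:R.
Proof.
rewrite mxE; case: p => i j /=.
have hi := ltn_ord i; have hj := ltn_ord j.
case: (eqVneq (c:nat) 0%N) => [c0|cn0];
case: (ltnP c I.+1) => hc;
case: (eqVneq (c:nat) i.+1) => e1;
case: (eqVneq (c:nat) (I.+1+j)%N) => e2;
case: (ltnP i I) => hiI; rewrite /= ?mulr0 ?mul0r ?mulr1 ?addr0 ?add0r //; lia.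
Qed.

Lemma valxE x (p : 'I_I.+1 * 'I_J.+1) : valx x p =
  xat x 0 + ((p.1 < I)%N)%:R * xat x p.1.+1 + xat x (I.+1 + p.2).
Proof.
rewrite /valx /xat.
under eq_bigr => c _ do rewrite rowvec_split !mulrDl -mulrA.
by rewrite !big_split /= -mulr_sumr.
Qed.

Lemma valx0 x : (forall p, valx x p = 0) -> x = 0.
Proof.
move=> h.
have h0 : xat x 0 = 0.
  move: (h (ord_max, ord_max)); rewrite valxE /= ltnn mul0r addr0 (xat_ge _ (k:=(I.+1+J)%N)) ?addr0 //; lia.

apply/matrixP => c k; rewrite (ord1 k) !mxE -xat_lt.
have hc := ltn_ord c.
case: (eqVneq (c:nat) 0%N) => [->|cn0] //.
case: (ltnP c I.+1) => hcI.
  have hi : (c.-1 < I.+1)%N by lia.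
  move: (h (Ordinal hi, ord_max)); rewrite valxE /= h0 add0r (xat_ge _ (k:=(I.+1+J)%N)); last by lia.
  by rewrite addr0 (_ : (c.-1 < I)%N = true) ?mul1r ?prednK //; lia.
have hj : (c - I.+1 < J.+1)%N by lia.
move: (h (ord_max, Ordinal hj)); rewrite valxE /= h0 add0r ltnn mul0r add0r.
by rewrite subnKC.
Qed.

Lemma valx_ex (a : 'I_I.+1 -> rat) (b : 'I_J.+1 -> rat) :
  exists x, forall p, valx x p = a p.1 + b p.2.
Proof.
exists (\col_(c < D) (if (c:nat) == 0%N then a ord_max + b ord_max
   else if (c < I.+1)%N then a (inord c.-1) - a ord_max
   else b (inord (c - I.+1)) - b ord_max)).
case=> i j; rewrite valxE /=.
have hD : (0 < D)%N by lia.
rewrite (xat_lt _ (Ordinal hD)) mxE /=.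
have -> : ((i < I)%:R * xat (\col_(c < D) (if (c:nat) == 0%N then a ord_max + b ord_max
   else if (c < I.+1)%N then a (inord c.-1) - a ord_max
   else b (inord (c - I.+1)) - b ord_max)) i.+1 = a i - a ord_max).
  case: (ltnP i I) => hi.
    have hi' : (i.+1 < D)%N by lia.
    by rewrite mul1r (xat_lt _ (Ordinal hi')) mxE /= ltnS hi inord_val.
  have -> : i = ord_max by apply/val_inj => /=; have := ltn_ord i; lia.
  by rewrite mul0r subrr.
case: (ltnP j J) => hj.
  have hj' : (I.+1 + j < D)%N by lia.
  rewrite (xat_lt _ (Ordinal hj')) mxE /=.
  rewrite (_ : (I.+1 + j < I.+1)%N = false); last by lia.
  rewrite (_ : (I.+1 + j - I.+1)%N = j); last by lia.
  rewrite inord_val; lra.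
rewrite xat_ge; last by lia.
have -> : j = ord_max by apply/val_inj => /=; have := ltn_ord j; lia.
lra.
Qed.

Lemma XF_mul (F : {set 'I_I.+1 * 'I_J.+1}) (e : #|F| = D) x k :
  (castmx (e, erefl) (XF F) *m x) k 0 = valx x (enum_val (cast_ord (esym e) k)).
Proof.
rewrite mxE /valx; apply: eq_bigr => c _.
by rewrite castmxE !mxE cast_ord_id.
Qed.

Lemma valx_zero p : valx 0 p = 0.
Proof. by rewrite /valx big1 // => c _; rewrite [X in _ * X]mxE mulr0. Qed.

Lemma ab_of_x x : exists a b, forall p : 'I_I.+1 * 'I_J.+1, valx x p = a p.1 + b p.2.
Proof.
exists (fun i : 'I_I.+1 => xat x 0 + ((i < I)%N)%:R * xat x i.+1).
exists (fun j : 'I_J.+1 => xat x (I.+1 + j)).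
by move=> p; rewrite valxE.
Qed.

Lemma sat_ker (F : {set 'I_I.+1 * 'I_J.+1}) : saturated F ->
  forall (a : 'I_I.+1 -> rat) (b : 'I_J.+1 -> rat), (forall p, p \in F -> a p.1 + b p.2 = 0) -> forall i j, a i + b j = 0.
Proof.
case=> e hu a b hab i j.
have [x hx] := valx_ex a b.
have h0 : castmx (e, erefl) (XF F) *m x = 0.
  apply/matrixP => k l; rewrite (ord1 l) XF_mul hx hab ?mxE //; exact: enum_valP.
have : x = 0 by rewrite -(mulKmx hu x) h0 mulmx0.
by move=> x0; rewrite -(hx (i, j)) x0 valx_zero.
Qed.

Lemma sat_surj (F : {set 'I_I.+1 * 'I_J.+1}) : saturated F ->
  forall t : 'I_I.+1 * 'I_J.+1 -> rat,
  exists a b, forall p, p \in F -> a p.1 + b p.2 = t p.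
Proof.
case=> e hu t.
pose y : 'cV[rat]_D := \col_k t (enum_val (cast_ord (esym e) k)).
pose x := invmx (castmx (e, erefl) (XF F)) *m y.
have hx : castmx (e, erefl) (XF F) *m x = y by rewrite mulKVmx.
have [a [b hab]] := ab_of_x x.
exists a, b => p hp.
rewrite -hab.
have := congr1 (fun M : 'cV[rat]_D => M (cast_ord e (enum_rank_in hp p)) 0) hx.
rewrite XF_mul mxE cast_ordK enum_rankK_in //.
Qed.

Lemma sat_intro (F : {set 'I_I.+1 * 'I_J.+1}) : #|F| = D ->
  (forall (a : 'I_I.+1 -> rat) (b : 'I_J.+1 -> rat), (forall p, p \in F -> a p.1 + b p.2 = 0) -> forall i j, a i + b j = 0) ->
  saturated F.
Proof.
move=> e hk; exists e.
rewrite unitmxE unitfE -det_tr; apply/negP => /det0P [v vn0 hv].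
have hM : castmx (e, erefl) (XF F) *m v^T = 0.
  by rewrite -[castmx _ _]trmxK -trmx_mul hv trmx0.
have [a [b hab]] := ab_of_x v^T.
have hF : forall p, p \in F -> a p.1 + b p.2 = 0.
  move=> p hp; rewrite -hab.
  have := congr1 (fun M : 'cV[rat]_D => M (cast_ord e (enum_rank_in hp p)) 0) hM.
  by rewrite XF_mul mxE cast_ordK enum_rankK_in.
have : v^T = 0 by apply: valx0 => p; rewrite hab; apply: hk.
by move/(congr1 trmx); rewrite trmxK trmx0 => v0; rewrite v0 eqxx in vn0.
Qed.
End H.
Section M.
Variable n : nat.
Local Notation w := (widen_ord (leqnSn n.+1)).

Lemma w_neq (i : 'I_n.+1) : w i != ord_max.
Proof. by rewrite -val_eqE /= neq_ltn ltn_ord. Qed.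

Lemma split_ord (k : 'I_n.+2) : k = ord_max \/ exists i, k = w i.
Proof.
case: (ltnP k n.+1) => hk; last by left; apply/val_inj => /=; have := ltn_ord k; lia.
by right; exists (Ordinal hk); apply/val_inj.
Qed.

Lemma card_embed (F : {set 'I_n.+1 * 'I_n.+1}) : #|embed F| = #|F|.
Proof.
rewrite /embed card_imset // => [[i j] [i' j']] /= [] /val_inj -> /val_inj -> //.
Qed.

Lemma mem_embed (F : {set 'I_n.+1 * 'I_n.+1}) p : p \in F -> (w p.1, w p.2) \in embed F.
Proof. by move=> hp; apply/imsetP; exists p. Qed.

Lemma embed_fst (F : {set 'I_n.+1 * 'I_n.+1}) q : q \in embed F -> q.1 != ord_max.
Proof. by case/imsetP => p _ ->; apply: w_neq. Qed.

Lemma embed_snd (F : {set 'I_n.+1 * 'I_n.+1}) q : q \in embed F -> q.2 != ord_max.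
Proof. by case/imsetP => p _ ->; apply: w_neq. Qed.
End M.

Theorem lemma4p4 (I : nat) (hI : (2 <= I)%N)
  (F : {set 'I_I * 'I_I}) (E : {set 'I_I.+1 * 'I_I.+1}) :
  saturated F ->
  embed F :&: E = set0 ->
  saturated (embed F :|: E) <->
  [/\ #|E| = 2%N,
      (forall p, p \in E -> p.1 = ord_max \/ p.2 = ord_max),
      (1 <= marginA (embed F :|: E) ord_max)%N &
      (1 <= marginB (embed F :|: E) ord_max)%N].
Proof.
case: I hI F E => [|n] // hn F E hF hdisj.
have cF : #|F| = (n.+1 + n.+1 - 1)%N by case: hF.
have cG : #|embed F :|: E| = (#|F| + #|E|)%N.
  by rewrite cardsU hdisj cards0 subn0 card_embed.
have notE q : q \in embed F -> q \in E -> False.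
  move=> h1 h2; have : q \in embed F :&: E by rewrite inE h1 h2.
  by rewrite hdisj inE.
have inG1 q : q \in embed F -> q \in embed F :|: E by move=> h; rewrite inE h.
have inG2 q : q \in E -> q \in embed F :|: E by move=> h; rewrite inE h orbT.
split.
- move=> hG.
  have cE : #|E| = 2%N.
    have : #|embed F :|: E| = (n.+2 + n.+2 - 1)%N by case: hG.
    by rewrite cG cF; lia.
  split => //.
  + move=> p hp; case: (split_ord p.1) => [->|[i hi]]; first by left.
    case: (split_ord p.2) => [->|[j hj]]; first by right.
    exfalso.
    have [a [b hab]] := sat_surj hG (fun q => (q == p)%:R).
    have hk := sat_ker hF (a := fun i => a (widen_ord (leqnSn n.+1) i))
                          (b := fun j => b (widen_ord (leqnSn n.+1) j)).
    have : a p.1 + b p.2 = 0.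
      rewrite hi hj; apply: hk => q hq.
      have hq' := mem_embed hq.
      rewrite (hab _ (inG1 _ hq')).
      case: eqP => // e; exfalso; apply: (notE _ hq'); rewrite e //.
    rewrite hab; last exact: inG2.
    by rewrite eqxx; apply/eqP; rewrite oner_eq0.
  + rewrite card_gt0; apply/negP => /eqP h0.
    have := sat_ker hG (a := fun i => (i == ord_max)%:R) (b := fun _ => 0).
    move=> /(_ _ ord_max ord_max); rewrite eqxx addr0 => h.
    have : (1 : rat) = 0.
      apply: h => q hq /=; rewrite addr0; case: eqP => // e.
      have : q \in [set p in embed F :|: E | p.1 == ord_max] by rewrite inE hq e eqxx.
      by rewrite h0 inE.
    by apply/eqP; rewrite oner_eq0.
  + rewrite card_gt0; apply/negP => /eqP h0.
    have := sat_ker hG (a := fun _ => 0) (b := fun j => (j == ord_max)%:R).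
    move=> /(_ _ ord_max ord_max); rewrite eqxx add0r => h.
    have : (1 : rat) = 0.
      apply: h => q hq /=; rewrite add0r; case: eqP => // e.
      have : q \in [set p in embed F :|: E | p.2 == ord_max] by rewrite inE hq e eqxx.
      by rewrite h0 inE.
    by apply/eqP; rewrite oner_eq0.
- case=> cE hpt hA hB.
  apply: sat_intro; first by rewrite cG cF cE; lia.
  move=> a b hab.
  pose w := widen_ord (leqnSn n.+1).
  have hk := sat_ker hF (a := fun i => a (w i)) (b := fun j => b (w j))
     (fun q hq => hab _ (inG1 _ (mem_embed hq))).
  pose k := a (w ord0).
  have ha i : a (w i) = k by have := hk i ord0; have := hk ord0 ord0; rewrite /k; lra.
  have hb j : b (w j) = - k by have := hk ord0 j; rewrite ha; lra.
  have inE' q : q \in embed F :|: E -> q.1 = ord_max \/ q.2 = ord_max -> q \in E.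
    rewrite inE => /orP [h|//] [] e; exfalso.
      by move: (embed_fst h); rewrite e eqxx.
    by move: (embed_snd h); rewrite e eqxx.
  have [pA hpA eA] : exists2 pA, pA \in E & pA.1 = ord_max.
    move: hA; rewrite card_gt0 => /set0Pn [q]; rewrite inE => /andP [hq /eqP e].
    by exists q => //; apply: inE' => //; left.
  have [pB hpB eB] : exists2 pB, pB \in E & pB.2 = ord_max.
    move: hB; rewrite card_gt0 => /set0Pn [q]; rewrite inE => /andP [hq /eqP e].
    by exists q => //; apply: inE' => //; right.
  have habE q : q \in E -> a q.1 + b q.2 = 0 by move=> h; apply: hab; apply: inG2.
  have key : a ord_max = k /\ b ord_max = - k.
    case: pA hpA eA => x1 y1 hA1 /= e1; subst x1.
    have hA1' := habE _ hA1; rewrite /= in hA1'.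
    case: (split_ord y1) => [e2|[j e2]].
      subst y1.
      have : ~~ (E \subset [set (ord_max, ord_max)]).
        apply/negP => /subset_leq_card; rewrite cards1 cE //.
      case/subsetPn => [[r1 r2] hr]; rewrite inE => hne.
      have hr' := habE _ hr; rewrite /= in hr'.
      case: (split_ord r1) => [e3|[i e3]]; case: (split_ord r2) => [e4|[j e4]]; subst r1 r2.
      * by rewrite eqxx in hne.
      * rewrite hb in hr'; split; lra.
      * rewrite ha in hr'; split; lra.
      * by case: (hpt _ hr) => /= e; move: (w_neq i) (w_neq j); rewrite e eqxx.
    subst y1; rewrite hb in hA1'.
    case: pB hpB eB => x2 y2 hB1 /= e2; subst y2.
    have hB1' := habE _ hB1; rewrite /= in hB1'.
    case: (split_ord x2) => [e3|[i e3]]; subst x2.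
      split; lra.
    rewrite ha in hB1'; split; lra.
  case: key => k1 k2 i j.
  case: (split_ord i) => [->|[i' ->]]; case: (split_ord j) => [->|[j' ->]];
    rewrite ?k1 ?k2 ?ha ?hb; lra.
Qed.
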